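(* Let $\mathbf{k}$ be a commutative ring, $n\ge0$, $\mathcal{A}=\mathbf{k}[S_n]$. If $\beta,\gamma\in\operatorname{Comp}_n$ and $\widetilde{\beta}\preceq_\pi\widetilde{\gamma}$, then $\mathcal{R}_\beta\subseteq\mathcal{R}_\gamma$.
   Context: $S_n$ is the symmetric group on $[n]=\{1,\dots,n\}$, with product $(uw)(i)=u(w(i))$. For $w\in S_n$, $\operatorname{Des}(w)=\{i\in[n-1]: w(i)>w(i+1)\}$. For $I\subseteq[n-1]$, $\mathbf{B}_I=\sum_{w\in S_n,\ \operatorname{Des}(w)\subseteq I} w\in\mathcal{A}$. A composition $\alpha=(\alpha_1,\dots,\alpha_p)$ of $n$ is a finite sequence of positive integers with sum $n$; $\operatorname{Comp}_n$ is the set of these. $\operatorname{Set}(\alpha)=\{\alpha_1,\alpha_1+\alpha_2,\dots,\alpha_1+\cdots+\alpha_{p-1}\}$, and $\mathbf{B}_\alpha:=\mathbf{B}_{\operatorname{Set}(\alpha)}$. The underlying partition $\widetilde\alpha$ is obtained by sorting the parts of $\alpha$ in weakly decreasing order. A composition $\alpha=(\alpha_1,\dots,\alpha_m)$ refines $\beta=(\beta_1,\dots,\beta_p)$ if $\alpha$ can be split into $p$ contiguous subsequences whose $j$-th one sums to $\beta_j$. For partitions $\lambda,\mu$ of $n$, $\lambda\preceq_\pi\mu$ means some rearrangement of the parts of $\lambda$ (as a composition) refines $\mu$; equivalently, writing $\lambda=(\lambda_1,\dots,\lambda_k)$, $\mu=(\mu_1,\dots,\mu_l)$, there is a map $f:[k]\to[l]$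 with $\mu_j=\sum_{i\in f^{-1}(j)}\lambda_i$ for all $j$. For $\beta\in\operatorname{Comp}_n$, $\mathcal{R}_\beta:=\mathbf{B}_\beta\mathcal{A}$. *)

(* Defs.v *)
From HB Require Import structures.
From mathcomp Require Import all_boot all_order all_algebra all_fingroup.
Set Implicit Arguments. Unset Strict Implicit. Unset Printing Implicit Defensive.
Import GRing.Theory.
Local Open Scope ring_scope.

(* Elements of the group algebra k[S_n]: finitely supported functions S_n -> k,
   i.e. sum_w f(w) w. *)
Definition KS (k : comPzRingType) (n : nat) := {ffun 'S_n -> k}.

(* Paper's product of permutations: (u w)(i) = u (w i).  In MathComp,
   (w * u)%g x = u (w x), so the paper's u w is MathComp's (w * u)%g. *)
Definition pmul (n : nat) (u w : 'S_n) : 'S_n := (w * u)%g.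

Definition ks_mul (k : comPzRingType) (n : nat) (f g : KS k n) : KS k n :=
  [ffun w => \sum_(u : 'S_n) \sum_(v : 'S_n | pmul u v == w) f u * g v].

(* One-line notation of w (values shifted to 0-based, harmless for comparisons). *)
Definition oneline (n : nat) (w : 'S_n) : seq nat := [seq val (w j) | j <- enum 'I_n].

(* Des(w) = { i in [n-1] : w(i) > w(i+1) }  (1-indexed positions). *)
Definition Des (n : nat) (w : 'S_n) : seq nat :=
  [seq i <- iota 1 n.-1 | nth 0%N (oneline w) i.-1 > nth 0%N (oneline w) i]%N.

Definition is_comp (n : nat) (a : seq nat) : Prop :=
  all (fun x => 0 < x)%N a /\ sumn a = n.

Definition SetC (a : seq nat) : seq nat :=
  [seq sumn (take j a) | j <- iota 1 (size a).-1].

Definition BI (k : comPzRingType) (n : nat) (I : seq nat) : KS k n :=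
  [ffun w => if all (fun i => i \in I) (Des w) then 1 else 0].

Definition Bcomp (k : comPzRingType) (n : nat) (a : seq nat) : KS k n :=
  BI k n (SetC a).

Definition underlying (a : seq nat) : seq nat := sort geq a.

Definition pi_le (la mu : seq nat) : Prop :=
  exists f : 'I_(size la) -> 'I_(size mu),
    forall j : 'I_(size mu), nth 0%N mu j = (\sum_(i | f i == j) nth 0%N la i)%N.

Definition Rcomp (k : comPzRingType) (n : nat) (b : seq nat) (x : KS k n) : Prop :=
  exists a : KS k n, x = ks_mul (Bcomp k n b) a.

(* Main.v *)
Require Import Defs.
From mathcomp Require Import all_boot all_order all_algebra all_fingroup.
From mathcomp Require Import zify.

Section Alg.
Import GRing.Theory.
Variables (k : comPzRingType) (n : nat).
Local Open Scope ring_scope.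

Lemma ks_mulE (f g : KS k n) w :
  ks_mul f g w = \sum_u f u * g (w * u^-1)%g.
Proof.
rewrite ffunE; apply: eq_bigr => u _.
rewrite (big_pred1 (w * u^-1)%g) // => v /=; rewrite /pmul.
by apply/eqP/eqP => [<-|->]; rewrite ?mulgK ?mulgVK.
Qed.

Lemma ks_mulA (f g h : KS k n) :
  ks_mul (ks_mul f g) h = ks_mul f (ks_mul g h).
Proof.
apply/ffunP => w; rewrite !ks_mulE.
under eq_bigr do rewrite ks_mulE mulr_suml.
rewrite exchange_big /=; apply: eq_bigr => v _.
rewrite ks_mulE mulr_sumr (reindex_inj (@mulIg _ v)) /=.
apply: eq_bigr => x _; rewrite mulgK invMg mulgA mulrA //.
Qed.

End Alg.


Section Match.
Variable n : nat.
Implicit Types a c : 'I_n -> nat.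

Definition K a (x : 'I_n) := a x * n + x.
Definition Rk a (x : 'I_n) := #|[set y | K a y < K a x]|.
Definition N a l := #|[set y | a y < l]|.

Lemma K_inj a : injective (K a).
Proof.
move=> x y H; apply: val_inj => /=.
have := congr1 (modn^~ n) H; rewrite /K !modnMDl !modn_small //.
Qed.

Lemma Rk_lt a x : Rk a x < n.
Proof.
have Hn : 0 < n by case: x => /= m; case: n => //.
have : [set y | K a y < K a x] \subset [set~ x].
  by apply/subsetP => y; rewrite !inE; apply: contraTneq => ->; rewrite ltnn.
move/subset_leq_card; rewrite cardsC1 card_ord /Rk; lia.
Qed.

Lemma Rk_mono a x y : K a x < K a y -> Rk a x < Rk a y.
Proof.
move=> H; apply: proper_card; apply/properP; split.
  by apply/subsetP => z; rewrite !inE => /ltn_trans; apply.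
by exists x; rewrite !inE ?H ?ltnn.
Qed.

Lemma Rk_inj a : injective (fun x => Ordinal (Rk_lt a x)).
Proof.
move=> x y /(congr1 val) /= H; apply: (K_inj a).
case: (ltngtP (K a x) (K a y)) => // /Rk_mono; rewrite H ltnn //.
Qed.

Definition Rp a : 'S_n := perm (Rk_inj a).

Lemma RpE a x : (Rp a x : nat) = Rk a x.
Proof. by rewrite permE. Qed.

Lemma N_S a l : N a l.+1 = N a l + #|[set y | a y == l]|.
Proof.
rewrite /N -(cardsID [set y | a y < l] [set y | a y < l.+1]).
have -> : [set y | a y < l.+1] :&: [set y | a y < l] = [set y | a y < l].
  by apply/setP => y; rewrite !inE; apply/idP/idP => [/andP[]|H] //; rewrite H andbT; lia.
have -> : [set y | a y < l.+1] :\: [set y | a y < l] = [set y | a y == l].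
  by apply/setP => y; rewrite !inE; apply/idP/idP => [/andP[H1 H2]|/eqP ->]; [lia| rewrite ltnn ltnSn].
by [].
Qed.

Lemma N_eq a c : (forall l, #|[set p | a p == l]| = #|[set x | c x == l]|) ->
  forall l, N a l = N c l.
Proof.
move=> H; elim=> [|l IH]; last by rewrite !N_S IH H.
by rewrite /N; congr #|_|; apply/setP => y; rewrite !inE.
Qed.

Lemma N_mono a l l' : l <= l' -> N a l <= N a l'.
Proof.
move=> H; apply: subset_leq_card; apply/subsetP => y; rewrite !inE => H'; lia.
Qed.

Lemma Rk_bounds a p : N a (a p) <= Rk a p < N a (a p).+1.
Proof.
have Hp := ltn_ord p.
apply/andP; split.
  apply: subset_leq_card; apply/subsetP => y; rewrite !inE /K => H.
  have Hy := ltn_ord y; nia.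
apply: proper_card; apply/properP; split.
  apply/subsetP => y; rewrite !inE /K => H.
  have Hy := ltn_ord y; nia.
by exists p; rewrite !inE ?ltnS ?leqnn ?ltnn.
Qed.

Lemma match_exists a c : (forall l, #|[set p | a p == l]| = #|[set x | c x == l]|) ->
  exists g : 'S_n, (forall x, a (g x) = c x) /\
    (forall x y : 'I_n, x < y -> c x = c y -> g x < g y).
Proof.
move=> Hc; have HN := N_eq _ _ Hc.
have Ha : forall x, a ((Rp c * (Rp a)^-1)%g x) = c x.
  move=> x; set p := (Rp c * (Rp a)^-1)%g x.
  have E : Rk a p = Rk c x by rewrite -!RpE /p permM permKV.
  have B1 := Rk_bounds a p; have B2 := Rk_bounds c x.
  rewrite E -!HN in B1 B2.
  case: (ltngtP (a p) (c x)) => // H.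
    by have := N_mono a _ _ H; lia.
  by have := N_mono a _ _ H; lia.
exists (Rp c * (Rp a)^-1)%g; split => // x y Hxy Hcxy.
have H1 : Rk c x < Rk c y by apply: Rk_mono; rewrite /K Hcxy; lia.
set gx := (Rp c * (Rp a)^-1)%g x; set gy := (Rp c * (Rp a)^-1)%g y.
have E1 : Rk a gx = Rk c x by rewrite -!RpE /gx permM permKV.
have E2 : Rk a gy = Rk c y by rewrite -!RpE /gy permM permKV.
case: (ltngtP gx gy) => // H.
  have : K a gy < K a gx by rewrite /K (Ha x : a gx = c x) (Ha y : a gy = c y) Hcxy; lia.
  by move/Rk_mono; lia.
have : gx = gy by apply: val_inj.
by move/perm_inj => E; rewrite E ltnn in Hxy.
Qed.

Definition rk a (p : 'I_n) := #|[set q | (a q == a p) && (q < p)]|.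

Lemma rk_g a c (g : 'S_n) : (forall x, a (g x) = c x) ->
    (forall x y : 'I_n, x < y -> c x = c y -> g x < g y) ->
  forall x, rk a (g x) = rk c x.
Proof.
move=> Ha Hm x; rewrite /rk.
have -> : [set q | (a q == a (g x)) && (q < g x)] = g @: [set y | (c y == c x) && (y < x)].
  apply/setP => q; rewrite inE; apply/idP/imsetP.
    move=> /andP[/eqP Haq Hq]; exists ((g^-1)%g q); last by rewrite permKV.
    rewrite inE -Ha permKV Haq Ha eqxx /=.
    have Hc : c ((g^-1)%g q) = c x by rewrite -Ha permKV Haq Ha.
    case: (ltngtP ((g^-1)%g q) x) => // H.
      by have := Hm _ _ H (esym Hc); rewrite permKV; lia.
    have : (g^-1)%g q = x by apply: val_inj.
    by move=> E; rewrite -E permKV ltnn in Hq.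
  move=> [y]; rewrite inE => /andP[/eqP Hy Hyx] ->.
  by rewrite !Ha Hy eqxx /= Hm.
by rewrite card_imset //; apply: perm_inj.
Qed.

Lemma rk_inj a p q : a p = a q -> rk a p = rk a q -> p = q.
Proof.
move=> Hpq Hr; apply: val_inj; case: (ltngtP p q) => // H.
  have : rk a p < rk a q.
    apply: proper_card; apply/properP; split.
      apply/subsetP => z; rewrite !inE Hpq => /andP[-> Hz] /=; lia.
    by exists p; rewrite !inE ?Hpq ?eqxx ?H ?ltnn.
  lia.
have : rk a q < rk a p.
  apply: proper_card; apply/properP; split.
    apply/subsetP => z; rewrite !inE Hpq => /andP[-> Hz] /=; lia.
  by exists q; rewrite !inE ?Hpq ?eqxx ?H ?ltnn.
lia.
Qed.

Lemma match_uniq a c (g1 g2 : 'S_n) :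
  (forall x, a (g1 x) = c x) -> (forall x y : 'I_n, x < y -> c x = c y -> g1 x < g1 y) ->
  (forall x, a (g2 x) = c x) -> (forall x y : 'I_n, x < y -> c x = c y -> g2 x < g2 y) ->
  g1 = g2.
Proof.
move=> H1 M1 H2 M2; apply/permP => x; apply: (rk_inj a).
  by rewrite H1 H2.
by rewrite (rk_g _ _ _ H1 M1) (rk_g _ _ _ H2 M2).
Qed.

End Match.

Section Key.
Variables (k : comPzRingType) (n : nat).

Definition Sh (bc : 'I_n -> nat) (w : 'S_n) : bool :=
  [forall p : 'I_n, forall q : 'I_n, ((p < q) && (bc p == bc q)) ==> (w p < w q)].

Lemma ShP bc (w : 'S_n) : reflect (forall p q : 'I_n, p < q -> bc p = bc q -> w p < w q) (Sh bc w).
Proof.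
apply: (iffP forallP) => H p.
  move=> q Hpq E; have := forallP (H p) q; rewrite Hpq E eqxx /=; exact.
apply/forallP => q; apply/implyP => /andP[H1 /eqP H2]; exact: H.
Qed.

Definition Tset (bB bG F : 'I_n -> nat) (v : 'S_n) : bool :=
  [forall p, bG (v p) == F p] && Sh bB v.

Definition ind (P : 'S_n -> bool) : KS k n := [ffun w => if P w then 1%R else 0%R].

Section K.
Variables (bB bG F : 'I_n -> nat).
Hypothesis HF : forall p q, bB p = bB q -> F p = F q.
Hypothesis Hcard : forall l, #|[set p | F p == l]| = #|[set p | bG p == l]|.

Lemma comp_Sh u v : Sh bG u -> Tset bB bG F v -> Sh bB (v * u)%g.
Proof.
move=> /ShP Hu /andP[/forallP Hv /ShP Hv2]; apply/ShP => p q Hpq E.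
rewrite !permM; apply: Hu; first exact: Hv2.
by rewrite (eqP (Hv p)) (eqP (Hv q)); apply: HF.
Qed.

Lemma key_exists w : Sh bB w -> exists u, Sh bG u && Tset bB bG F (w * u^-1)%g.
Proof.
move=> /ShP Hw.
pose c x := F ((w^-1)%g x).
have Hc : forall l, #|[set p | bG p == l]| = #|[set x | c x == l]|.
  move=> l; rewrite -Hcard.
  have -> : [set x | c x == l] = (fun x => (w^-1)%g x) @^-1: [set p | F p == l].
    by apply/setP => x; rewrite !inE.
  by rewrite card_preimset //; apply: perm_inj.
have [g [Hg1 Hg2]] := match_exists n bG c Hc.
exists (g^-1)%g; apply/andP; split.
  apply/ShP => p q Hpq E.
  have Ec : c ((g^-1)%g p) = c ((g^-1)%g q) by rewrite -!Hg1 !permKV.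
  case: (ltngtP ((g^-1)%g p) ((g^-1)%g q)) => // H.
    by have := Hg2 _ _ H (esym Ec); rewrite !permKV; lia.
  have : (g^-1)%g p = (g^-1)%g q by apply: val_inj.
  by move/perm_inj => E'; rewrite E' ltnn in Hpq.
apply/andP; split.
  by apply/forallP => p; rewrite permM invgK Hg1 /c permK.
apply/ShP => p q Hpq E; rewrite !permM invgK; apply: Hg2; first exact: Hw.
by rewrite /c !permK; apply: HF.
Qed.

Lemma key_uniq w u1 u2 : Sh bG u1 && Tset bB bG F (w * u1^-1)%g ->
  Sh bG u2 && Tset bB bG F (w * u2^-1)%g -> u1 = u2.
Proof.
pose c x := F ((w^-1)%g x).
have P : forall u, Sh bG u && Tset bB bG F (w * u^-1)%g ->
    (forall x, bG ((u^-1)%g x) = c x) /\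
    (forall x y : 'I_n, x < y -> c x = c y -> (u^-1)%g x < (u^-1)%g y).
  move=> u /andP[/ShP Hu /andP[/forallP Hv _]].
  have H1 : forall x, bG ((u^-1)%g x) = c x.
    by move=> x; have := eqP (Hv ((w^-1)%g x)); rewrite permM permKV.
  split => // x y Hxy Ec.
  have Eb : bG ((u^-1)%g y) = bG ((u^-1)%g x) by rewrite !H1.
  case: (ltngtP ((u^-1)%g x) ((u^-1)%g y)) => // H.
    by have := Hu _ _ H Eb; rewrite !permKV; lia.
  have : (u^-1)%g x = (u^-1)%g y by apply: val_inj.
  by move/perm_inj => E'; rewrite E' ltnn in Hxy.
move=> /P [A1 A2] /P [B1 B2].
have := match_uniq n bG c _ _ A1 A2 B1 B2.
by move/(congr1 (fun g => (g^-1)%g)); rewrite !invgK.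
Qed.

Lemma key : ind (Sh bB) = ks_mul (ind (Sh bG)) (ind (Tset bB bG F)).
Proof.
apply/ffunP => w; rewrite ks_mulE ffunE.
under eq_bigr do rewrite !ffunE.
case Hw: (Sh bB w).
  have [u0 Hu0] := key_exists w Hw.
  rewrite (bigD1 u0) //=; move/andP: (Hu0) => [-> ->]; rewrite GRing.mulr1 big1 ?GRing.addr0 //.
  move=> u Hu; case E1: (Sh bG u); case E2: (Tset bB bG F (w * u^-1)%g);
    rewrite ?GRing.mulr0 ?GRing.mul0r //.
  by rewrite (key_uniq w u u0) ?eqxx ?E1 ?E2 in Hu.
rewrite big1 // => u _.
case E1: (Sh bG u); case E2: (Tset bB bG F (w * u^-1)%g);
    rewrite ?GRing.mulr0 ?GRing.mul0r //.
have := comp_Sh _ _ E1 E2; rewrite mulgVK Hw //.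
Qed.
End K.
End Key.

Definition blkn (b : seq nat) (i : nat) := count (fun s => s <= i) (SetC b).

Lemma count_le_S (l : seq nat) i :
  count (fun s => s <= i.+1) l = count (fun s => s <= i) l + count_mem i.+1 l.
Proof.
elim: l => //= x l ->.
case H1: (x <= i); case H2: (x == i.+1); case H3: (x <= i.+1) => /=; lia.
Qed.

Lemma blkn_mono b i j : i <= j -> blkn b i <= blkn b j.
Proof. by move=> H; apply: sub_count => s /= Hs; lia. Qed.

Section Trans.
Variables (k : comPzRingType) (n : nat) (b : seq nat).

Definition blk (p : 'I_n) := blkn b p.

Definition W (w : 'S_n) i := nth 0 (oneline w) i.

Lemma W_val w (p : 'I_n) : W w p = w p.
Proof.
by rewrite /W /oneline (nth_map p) ?size_enum_ord ?ltn_ord // nth_ord_enum.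
Qed.

Lemma W_neq w i j : i < n -> j < n -> i != j -> W w i != W w j.
Proof.
move=> Hi Hj Hij.
have := W_val w (Ordinal Hi); have := W_val w (Ordinal Hj); rewrite /= => -> ->.
apply: contra_neq Hij => E.
have : Ordinal Hi = Ordinal Hj by apply: (@perm_inj _ w); apply: val_inj.
by move/(congr1 val).
Qed.

Lemma Des_Sh w : all (fun i => i \in SetC b) (Des w) = Sh n blk w.
Proof.
rewrite /Des all_filter; apply/allP/ShP.
  move=> H.
  have step : forall i, i.+1 < n -> blkn b i = blkn b i.+1 -> W w i < W w i.+1.
    move=> i Hi E.
    have := H i.+1; rewrite mem_iota /=.
    have Hr : 0 < i.+1 < 1 + n.-1 by lia.
    move=> /(_ Hr) /implyP Himp.
    have Hne : W w i != W w i.+1 by apply: W_neq; lia.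
    case: (ltngtP (W w i) (W w i.+1)) => // Hlt.
      have Hm := Himp Hlt.
      move: E; rewrite /blkn count_le_S.
      have : count_mem i.+1 (SetC b) != 0 by apply/eqP => /count_memPn; rewrite Hm.
      lia.
    by move: Hne; rewrite Hlt eqxx.
  have chain : forall d p, p + d.+1 < n -> blkn b p = blkn b (p + d.+1) ->
      W w p < W w (p + d.+1).
    elim=> [|d IH] p Hp E; first by rewrite addn1 in Hp E *; exact: step.
    have M1 := blkn_mono b (p + d.+1) (p + d.+2) (ltac:(lia)).
    have M2 := blkn_mono b p (p + d.+1) (ltac:(lia)).
    have E1 : blkn b p = blkn b (p + d.+1) by lia.
    have S2 := IH p (ltac:(lia)) E1.
    have S1 := step (p + d.+1); rewrite -addnS in S1.
    apply: ltn_trans S2 (S1 _ _); lia.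
  move=> p q Hpq E.
  rewrite -!W_val.
  have Hq : (q : nat) = p + (q - p - 1).+1 by lia.
  rewrite Hq; apply: chain; rewrite -Hq //.
move=> H i; rewrite mem_iota => /andP[Hi1 Hi2].
apply/implyP => Hgt; apply/negPn/negP => Hni.
have Hi : i < n by lia.
have Hi' : i.-1 < n by lia.
have E : blkn b i.-1 = blkn b i.
  have := count_le_S (SetC b) i.-1; rewrite prednK //.
  by move/count_memPn: Hni => ->; rewrite addn0.
have Hlt : (Ordinal Hi' < Ordinal Hi) by rewrite /=; lia.
have := H _ _ Hlt E; rewrite -!W_val /= /W; lia.
Qed.

Lemma Bcomp_Sh : Bcomp k n b = ind k n (Sh n blk).
Proof. by apply/ffunP => w; rewrite !ffunE Des_Sh. Qed.

End Trans.

Lemma card_lt n c : c <= n -> #|[set p : 'I_n | p < c]| = c.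
Proof.
move=> Hc.
have -> : [set p : 'I_n | p < c] = widen_ord Hc @: [set: 'I_c].
  apply/setP => p; rewrite inE; apply/idP/imsetP => [Hp | [x _ ->]].
    by exists (Ordinal Hp) => //; apply: val_inj.
  by rewrite /= ltn_ord.
rewrite card_imset ?cardsT ?card_ord //.
by move=> x y /(congr1 val) /= /val_inj.
Qed.

Lemma card_range n a c : a <= c -> c <= n -> #|[set p : 'I_n | a <= p < c]| = c - a.
Proof.
move=> Hac Hcn.
have E1 := card_lt _ _ Hcn; have E2 := card_lt _ _ (leq_trans Hac Hcn).
have H := cardsID [set p : 'I_n | p < a] [set p : 'I_n | p < c].
have F1 : [set p : 'I_n | p < c] :&: [set p : 'I_n | p < a] = [set p : 'I_n | p < a].
  by apply/setP => p; rewrite !inE; apply/idP/idP => [/andP[]|H'] //; rewrite H' andbT; lia.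
have F2 : [set p : 'I_n | p < c] :\: [set p : 'I_n | p < a] = [set p : 'I_n | a <= p < c].
  apply/setP => p; rewrite !inE; case H1: (p < a); case H2: (p < c); case H3: (a <= p) => /=; lia.
rewrite F1 F2 E1 E2 in H; lia.
Qed.

Definition Sb (b : seq nat) j := sumn (take j b).

Lemma Sb_succ b j : Sb b j.+1 = Sb b j + nth 0 b j.
Proof.
rewrite /Sb; case: (ltnP j (size b)) => H.
  by rewrite (take_nth 0 H) sumn_rcons.
by rewrite !take_oversize ?nth_default ?addn0 //; lia.
Qed.

Lemma Sb_mono b i j : i <= j -> Sb b i <= Sb b j.
Proof.
move=> H; rewrite -(subnKC H); elim: (j - i) => [|d IH]; first by rewrite addn0.
by rewrite addnS Sb_succ; lia.
Qed.

Lemma Sb0 b : Sb b 0 = 0. Proof. by case: b. Qed.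
Lemma Sb_size b : Sb b (size b) = sumn b. Proof. by rewrite /Sb take_size. Qed.

Lemma blknE b i : blkn b i = count (fun j => Sb b j <= i) (iota 1 (size b).-1).
Proof. by rewrite /blkn /SetC count_map. Qed.

Lemma blk_ge b j i : j <= size b -> i < sumn b -> (j <= blkn b i) = (Sb b j <= i).
Proof.
move=> Hj Hi; case: j Hj => [|j] Hj; first by rewrite Sb0.
set m := size b in Hj *.
rewrite blknE.
have -> : m.-1 = j + (m - j.+1) by lia.
rewrite iotaD count_cat.
case: (leqP (Sb b j.+1) i) => H.
  have Hjm : j.+1 < m.
    rewrite ltn_neqAle Hj andbT; apply/eqP => E.
    by move: H; rewrite E /m Sb_size; lia.
  rewrite (@eq_in_count _ _ predT (iota 1 j)); last first.
    move=> t; rewrite mem_iota => Ht /=; apply: leq_trans H; apply: Sb_mono; lia.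
  rewrite count_predT size_iota.
  have -> : m - j.+1 = (m - j.+2).+1 by lia.
  rewrite /= add1n H; lia.
rewrite (@eq_in_count _ _ pred0 (iota (1 + j) _)); last first.
  move=> t; rewrite mem_iota => Ht /=; apply/negbTE; rewrite -ltnNge.
  apply: (leq_trans H); apply: Sb_mono; lia.
rewrite count_pred0 addn0.
have := count_size (fun j0 : nat => Sb b j0 <= i) (iota 1 j); rewrite size_iota.
move=> Hc; apply/negbTE; rewrite -ltnNge; lia.
Qed.

Lemma class_size n b j : sumn b = n -> j < size b ->
  #|[set p : 'I_n | blk n b p == j]| = nth 0 b j.
Proof.
move=> Hn Hj.
have -> : [set p : 'I_n | blk n b p == j] = [set p : 'I_n | Sb b j <= p < Sb b j.+1].
  apply/setP => p; rewrite !inE /blk eqn_leq leqNgt.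
  have Hp : p < sumn b by rewrite Hn ltn_ord.
  rewrite (blk_ge _ _ _ (ltnW Hj) Hp) (blk_ge _ _ _ Hj Hp); case E1: (Sb b j <= p); case E2: (Sb b j.+1 <= p) => /=; lia.
have M : Sb b j.+1 <= n by rewrite -Hn -Sb_size; apply: Sb_mono.
rewrite (card_range n) //; first by rewrite Sb_succ; lia.
by apply: Sb_mono.
Qed.

Lemma blk_lt n b (p : 'I_n) : sumn b = n -> blk n b p < size b.
Proof.
move=> Hn; have Hp : (p : nat) < sumn b by rewrite Hn.
have Hsz : 0 < size b by move: Hp; case: (b).
rewrite /blk blknE.
have := count_size (fun j => Sb b j <= p) (iota 1 (size b).-1); rewrite size_iota.
lia.
Qed.

Lemma relabel n b sb : sumn b = n -> perm_eq sb b ->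
  exists h : 'I_n -> 'I_(size sb),
    (forall p q, (h p == h q) = (blk n b p == blk n b q)) /\
    (forall i : 'I_(size sb), #|[set p | h p == i]| = nth 0 sb i).
Proof.
move=> Hn Pb.
have [Is HIs Esb] := perm_iotaP 0 Pb.
have Uis : uniq Is by rewrite (perm_uniq HIs) iota_uniq.
have SIs : size Is = size b by rewrite (perm_size HIs) size_iota.
have Ssb : size sb = size b by rewrite Esb size_map.
have Mem : forall p : 'I_n, blk n b p \in Is.
  by move=> p; rewrite (perm_mem HIs) mem_iota /= add0n blk_lt.
have Hlt : forall p : 'I_n, index (blk n b p) Is < size sb.
  by move=> p; rewrite Ssb -SIs index_mem.
exists (fun p => Ordinal (Hlt p)); split.
  move=> p q; rewrite -val_eqE /=.
  apply/eqP/eqP => [E|->] //.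
  by rewrite -(nth_index 0 (Mem p)) E nth_index.
move=> i.
have Hi : (i : nat) < size Is by rewrite SIs -Ssb.
have -> : [set p | Ordinal (Hlt p) == i] = [set p : 'I_n | blk n b p == nth 0 Is i].
  apply/setP => p; rewrite !inE -val_eqE /=.
  apply/eqP/eqP => [<-|->]; first by rewrite nth_index.
  by rewrite index_uniq.
rewrite class_size //; last first.
  have : nth 0 Is i \in Is by apply: mem_nth.
  by rewrite (perm_mem HIs) mem_iota.
transitivity (nth 0 [seq nth 0 b j | j <- Is] i); first by rewrite (nth_map 0).
by rewrite -Esb.
Qed.

Lemma Sh_ext n (a a' : 'I_n -> nat) : (forall p q, (a p == a q) = (a' p == a' q)) ->
  Sh n a =1 Sh n a'.
Proof.
move=> H w; rewrite /Sh; apply: eq_forallb => p; apply: eq_forallb => q.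
by rewrite H.
Qed.

Lemma ind_ext k n (P Q : 'S_n -> bool) : P =1 Q -> ind k n P = ind k n Q.
Proof. by move=> H; apply/ffunP => w; rewrite !ffunE H. Qed.

Theorem proposition2p6 (k : comPzRingType) (n : nat) (b c : seq nat) :
  is_comp n b -> is_comp n c ->
  pi_le (underlying b) (underlying c) ->
  forall x : KS k n, Rcomp b x -> Rcomp c x.
Proof.
move=> [_ Hb] [_ Hc] [f Hf] x [a ->].
have Pb : perm_eq (underlying b) b by rewrite /underlying perm_sort.
have Pc : perm_eq (underlying c) c by rewrite /underlying perm_sort.
have [hB [HB1 HB2]] := relabel n b _ Hb Pb.
have [hG [HG1 HG2]] := relabel n c _ Hc Pc.
set bB := fun p => nat_of_ord (hB p).
set bG := fun p => nat_of_ord (hG p).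
set F := fun p => nat_of_ord (f (hB p)).
have HF : forall p q, bB p = bB q -> F p = F q.
  by move=> p q /val_inj E; rewrite /F E.
have Hcard : forall l, #|[set p | F p == l]| = #|[set p | bG p == l]|.
  move=> l; case: (ltnP l (size (underlying c))) => Hl; last first.
    have -> : [set p | F p == l] = set0.
      by apply/setP => p; rewrite !inE /F /=; apply/negbTE; have := ltn_ord (f (hB p)); lia.
    have -> : [set p | bG p == l] = set0.
      apply/setP => p; rewrite !inE; apply/negbTE/eqP => E; have := ltn_ord (hG p).
      rewrite /bG /= in E; rewrite E => H1; by rewrite leqNgt H1 in Hl.
    by [].
  pose L := Ordinal Hl.
  have -> : [set p | bG p == l] = [set p | hG p == L] by apply/setP => p; rewrite !inE.
  rewrite HG2 (Hf L) -sum1_card.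
  rewrite (eq_bigl (fun p => f (hB p) == L)); last by move=> p; rewrite !inE.
  rewrite (partition_big hB (fun i => f i == L)) //=.
  apply: eq_bigr => i /eqP Hi.
  rewrite -HB2 -sum1_card; apply: eq_bigl => p; rewrite !inE.
  by case E: (hB p == i); rewrite ?andbT ?andbF // (eqP E) Hi eqxx.
have K := key k n bB bG F HF Hcard.
exists (ks_mul (ind k n (Tset n bB bG F)) a).
rewrite -ks_mulA.
rewrite (Bcomp_Sh k n b) (Bcomp_Sh k n c).
rewrite (ind_ext k n _ _ (Sh_ext n _ bB (fun p q => esym (HB1 p q)))).
rewrite (ind_ext k n _ _ (Sh_ext n _ bG (fun p q => esym (HG1 p q)))).
by rewrite K.
Qed.
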